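(* Let $A$ be an algebra of Engel type. Then $A$ can be embedded into a prime algebra of Engel type.
   Context: An algebra here is a finite-dimensional vector space $A$ over a field $\Bbbk$ of characteristic zero with finitely many symmetric multilinear operations $\Psi_\ell:A^\ell\to A$, $2\le\ell\le m$ (equivalently, via $x\mapsto x-\sum_\ell\Psi_\ell(x,\dots,x)$, a polynomial self-map of $A$). An ideal is a subspace $I$ with $\Psi_\ell(a_1,\dots,a_\ell)\in I$ whenever some $a_i\in I$. The algebra is prime if it has no nonzero ideals with zero product, where the product of ideals $I,J$ is the span of values of operations with one argument in $I$, one in $J$, and the rest arbitrary. An embedding is an injective linear map compatible with the operations. For $x\in A$ let $\mathrm{Ad}_{\ell-1}(x):y\mapsto\Psi_\ell(y,x,\dots,x)$ and $E_s(x)=\sum \ell_1\cdots\ell_q\,\mathrm{Ad}_{\ell_1-1}(x)\circ\cdots\circ\mathrm{Ad}_{\ell_q-1}(x)$ over all $q\ge1$, $2\le\ell_i\le m$, $\sum(\ell_i-1)=s$. $A$ is of Engel type if there is $s_0$ with $E_s(x)=0$ for all $x\in A$, $s\ge s_0$ (equivalently, the map $x\mapsto x-\sum_\ell\Psi_\ell(x,\dots,x)$ has Jacobian determinant $1$). *)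

(* Defs.v *)
From HB Require Import structures.
From mathcomp Require Import all_boot all_order all_algebra all_fingroup.
Set Implicit Arguments. Unset Strict Implicit. Unset Printing Implicit Defensive.
Import GRing.Theory.
Local Open Scope ring_scope.

(* An "algebra" on the finite-dimensional F-vector space V with operations of
   degrees 2..m is given by a family  Psi l : (V^l) -> V  (arguments as a
   finite function 'I_l -> V).  Psi l is required to be 0 for l < 2 or l > m
   (these operations do not exist). *)
Section Alg.
Variables (F : fieldType) (V : vectType F).
Definition ops := forall l : nat, {ffun 'I_l -> V} -> V.

Definition upd l (t : {ffun 'I_l -> V}) (i : 'I_l) (x : V) : {ffun 'I_l -> V} :=
  [ffun j => if j == i then x else t j].

Definition is_algebra (m : nat) (Psi : ops) : Prop :=
  [/\ (forall l t, (l < 2)%N \/ (m < l)%N -> Psi l t = 0),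
      (forall l (t : {ffun 'I_l -> V}) (i : 'I_l) (a : F) (x y : V),
          Psi l (upd t i (a *: x + y)) = a *: Psi l (upd t i x) + Psi l (upd t i y)) &
      (forall l (t : {ffun 'I_l -> V}) (s : 'S_l),
          Psi l [ffun j => t (s j)] = Psi l t)].

Definition is_ideal (Psi : ops) (I : {vspace V}) : Prop :=
  forall l (t : {ffun 'I_l -> V}) (i : 'I_l), t i \in I -> Psi l t \in I.

(* the product IJ (span of values of operations with one argument in I, another
   one in J, the rest arbitrary) is zero *)
Definition zero_product (Psi : ops) (I J : {vspace V}) : Prop :=
  forall l (t : {ffun 'I_l -> V}) (i j : 'I_l),
    i != j -> t i \in I -> t j \in J -> Psi l t = 0.

Definition prime_alg (Psi : ops) : Prop :=
  forall I J : {vspace V}, is_ideal Psi I -> is_ideal Psi J ->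
    zero_product Psi I J -> I = 0%VS \/ J = 0%VS.

(* Ad_{l-1}(x) : y |-> Psi_l(y, x, ..., x) *)
Definition Ad (Psi : ops) (l : nat) (x : V) (y : V) : V :=
  Psi l [ffun j : 'I_l => if val j == 0%N then y else x].

(* E_s(x) = sum over q >= 1, (l_1..l_q) with 2 <= l_i <= m and
   sum (l_i - 1) = s, of l_1...l_q Ad_{l_1-1}(x) o ... o Ad_{l_q-1}(x).
   (q <= s necessarily, since each l_i - 1 >= 1.) *)
Definition Eop (m : nat) (Psi : ops) (s : nat) (x : V) (y : V) : V :=
  \sum_(q < s.+1 | (0 < q)%N)
    \sum_(c : q.-tuple 'I_m.+1 |
            all (fun l : 'I_m.+1 => (2 <= l)%N) c &&
            (\sum_(l <- c) (val l).-1 == s)%N)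
      (\prod_(l <- c) (val l))%:R *:
        foldr (fun (l : 'I_m.+1) (g : V -> V) => fun z => Ad Psi l x (g z))
              id c y.

Definition engel_type (m : nat) (Psi : ops) : Prop :=
  exists s0 : nat, forall s : nat, (s0 <= s)%N -> forall x y : V, Eop m Psi s x y = 0.
End Alg.

Definition embedding (F : fieldType) (V W : vectType F)
    (Psi : ops V) (Phi : ops W) (f : V -> W) : Prop :=
  [/\ forall (a : F) (x y : V), f (a *: x + y) = a *: f x + f y,
      injective f &
      forall l (t : {ffun 'I_l -> V}), f (Psi l t) = Phi l [ffun j => f (t j)]].

(* Main.v *)
Require Import Defs.
From HB Require Import structures.
From mathcomp Require Import all_boot all_order all_algebra all_fingroup.
From mathcomp Require Import zify ring.
Unset Printing Implicit Defensive.
Import GRing.Theory.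
Local Open Scope ring_scope.

Section Gen.
Variables (F : fieldType) (U : vectType F) (M : nat) (Psi : ops U).
Hypothesis HA : is_algebra M Psi.
Variable x : U.

Lemma self_add0 (V0 : zmodType) (a : V0) : a = a + a -> a = 0.
Proof. by move=> H; apply: (addrI a); rewrite addr0 -H. Qed.

Lemma Psi_zero l (t : {ffun 'I_l -> U}) i : t i = 0 -> Psi l t = 0.
Proof.
case: HA => _ Hlin _ ti0.
have := Hlin l t i 1 0 0; rewrite scale1r addr0.
have -> : upd t i 0 = t.
  by apply/ffunP => j; rewrite ffunE; case: eqP => // ->.
by rewrite scale1r; apply: self_add0.
Qed.

Lemma AdDZ l (a : F) (y z : U) : Ad Psi l x (a *: y + z) = a *: Ad Psi l x y + Ad Psi l x z.
Proof.
case: l => [|l].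
  by rewrite /Ad; case: HA => H0 _ _; rewrite !H0 ?scaler0 ?addr0 //; left.
case: HA => _ Hlin _.
pose t : {ffun 'I_l.+1 -> U} := [ffun j : 'I_l.+1 => if val j == 0%N then 0 else x].
have E w : [ffun j : 'I_l.+1 => if val j == 0%N then w else x] = upd t ord0 w.
  apply/ffunP => j; rewrite !ffunE; case: j => [[|j] Hj] //=.
by rewrite /Ad !E Hlin.
Qed.

Lemma Ad0 l : Ad Psi l x 0 = 0.
Proof. by have := AdDZ l 1 0 0; rewrite !scale1r addr0; apply: self_add0. Qed.
Lemma AdD l y z : Ad Psi l x (y + z) = Ad Psi l x y + Ad Psi l x z.
Proof. by have := AdDZ l 1 y z; rewrite !scale1r. Qed.
Lemma AdZ l a y : Ad Psi l x (a *: y) = a *: Ad Psi l x y.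
Proof. by have := AdDZ l a y 0; rewrite !addr0 Ad0 addr0. Qed.
Lemma Ad_sum (l : nat) (I : Type) (r : seq I) (P : pred I) (G : I -> U) :
  Ad Psi l x (\sum_(i <- r | P i) G i) = \sum_(i <- r | P i) Ad Psi l x (G i).
Proof. exact: (big_morph _ (AdD l) (Ad0 l)). Qed.
Lemma Ad_big (a : nat) : (M < a)%N -> forall y, Ad Psi a x y = 0.
Proof. by move=> Ha y; case: HA => H0 _ _; rewrite /Ad H0 //; right. Qed.
Lemma Ad_small (a : nat) : (a < 2)%N -> forall y, Ad Psi a x y = 0.
Proof. by move=> Ha y; case: HA => H0 _ _; rewrite /Ad H0 //; left. Qed.

Definition fold_ad (c : seq 'I_M.+1) (y : U) : U :=
  foldr (fun (l : 'I_M.+1) (g : U -> U) => fun z => Ad Psi l x (g z)) id c y.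

Definition S q s y :=
  \sum_(c : q.-tuple 'I_M.+1 |
            all (fun l : 'I_M.+1 => (2 <= l)%N) c &&
            (\sum_(l <- c) (val l).-1 == s)%N)
      (\prod_(l <- c) (val l))%:R *: fold_ad c y.

Definition T s y := \sum_(q < s.+1) S q s y.

Lemma EopE s y : (0 < s)%N -> Eop M Psi s x y = T s y.
Proof.
move=> s0; rewrite /T (bigID (fun q : 'I_s.+1 => (0 < q)%N)) /=.
rewrite [X in _ = _ + X]big1 ?addr0; first by rewrite /Eop.
case=> [[|q] Hq] //= _; apply: big1 => c; rewrite (tuple0 c).
by case: s s0 Hq => // s' _ _; rewrite big_nil.
Qed.

Lemma S0 y : S 0 0 y = y.
Proof.
rewrite /S (big_pred1 [tuple]); first by rewrite /= big_nil scale1r.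
by move=> c; rewrite (tuple0 c) /= big_nil eqxx.
Qed.

Lemma S0pos s y : (0 < s)%N -> S 0 s y = 0.
Proof.
move=> s0; apply: big1 => c; rewrite (tuple0 c).
by case: s s0 => // s' _; rewrite big_nil.
Qed.

Lemma size_le_sum (c : seq 'I_M.+1) :
  all (fun l : 'I_M.+1 => (2 <= l)%N) c -> (size c <= \sum_(l <- c) (val l).-1)%N.
Proof.
elim: c => [|a c IH] //= /andP [Ha Hc]; rewrite big_cons.
have := IH Hc; case: (val a) Ha => [|[|n]] //= _ H.
by rewrite addSn ltnS (leq_trans H) // leq_addl.
Qed.

Lemma S_big q s y : (s < q)%N -> S q s y = 0.
Proof.
move=> sq; apply: big1 => c /andP [Hall /eqP Hs].
have := size_le_sum _ Hall; rewrite Hs size_tuple => H.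
by move: (leq_trans sq H); rewrite ltnn.
Qed.

Lemma big_tuple_cons q (G : q.+1.-tuple 'I_M.+1 -> U) :
  \sum_(c : q.+1.-tuple 'I_M.+1) G c =
  \sum_(a : 'I_M.+1) \sum_(c : q.-tuple 'I_M.+1) G [tuple of a :: c].
Proof.
rewrite pair_big /=.
rewrite (reindex (fun p : 'I_M.+1 * q.-tuple 'I_M.+1 => [tuple of p.1 :: p.2])) //.
exists (fun c : q.+1.-tuple 'I_M.+1 => (thead c, [tuple of behead c])).
  by case=> a c _ /=; congr (_, _); apply: val_inj.
by move=> c _; rewrite [in RHS](tuple_eta c).
Qed.

Lemma S_cons q s y :
  S q.+1 s y = \sum_(a : 'I_M.+1 | (2 <= a)%N && (a.-1 <= s)%N)
                  (val a)%:R *: Ad Psi a x (S q (s - (val a).-1)%N y).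
Proof.
rewrite /S big_mkcond big_tuple_cons [RHS]big_mkcond /=.
apply: eq_bigr => a _.
case Ha: ((2 <= a)%N && (a.-1 <= s)%N).
  rewrite Ad_sum scaler_sumr [RHS]big_mkcond /=; apply: eq_bigr => c _.
  case/andP: Ha => -> Has /=.
  rewrite big_cons.
  have -> : (a.-1 + \sum_(l <- c) (val l).-1 == s)%N = (\sum_(l <- c) (val l).-1 == s - a.-1)%N.
    apply/eqP/eqP => [<-|->]; first by rewrite addKn.
    by rewrite subnKC.
  case: (_ && _); last by rewrite ?Ad0 ?scaler0.
  by rewrite big_cons natrM AdZ scalerA.
apply: big1 => c _; rewrite big_cons.
case: (boolP (2 <= a)%N) Ha => H2 //= Has.
case: (boolP (a.-1 + _ == s)%N); rewrite ?andbF //= => /eqP Hs.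
by move: Has; rewrite -Hs leq_addr.
Qed.

Lemma T_rec s y : (0 < s)%N ->
  T s y = \sum_(a < s.+2 | (2 <= a)%N) a%:R *: Ad Psi a x (T (s - a.-1)%N y).
Proof.
move=> s0; rewrite /T big_ord_recl.
rewrite S0pos // add0r.
under eq_bigr do rewrite S_cons.
rewrite exchange_big /=.
transitivity (\sum_(a < M.+1 | (2 <= a)%N && (a.-1 <= s)%N)
   a%:R *: Ad Psi a x (T (s - a.-1)%N y)).
  apply: eq_bigr => a /andP [H2 Hs].
  rewrite -scaler_sumr -Ad_sum /T; congr (_ *: Ad _ _ _ _).
  have Hr : ((s - a.-1).+1 <= s)%N.
    move: H2 Hs s0; case: (val a) => // a'; lia.
  rewrite [RHS](big_ord_widen_cond s xpredT (fun q => S q (s - a.-1)%N y) Hr).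
  rewrite [RHS]big_mkcond; apply: eq_bigr => q _ /=; case: ifP => // /negbT.
  by rewrite -leqNgt => Hq; rewrite S_big.
rewrite (big_ord_widen_cond (M.+1 + s.+2) (fun a => (2 <= a)%N && (a.-1 <= s)%N)
   (fun a => a%:R *: Ad Psi a x (T (s - a.-1)%N y)) (leq_addr _ _)).
rewrite (big_ord_widen_cond (M.+1 + s.+2) (fun a => (2 <= a)%N) (fun a => a%:R *: Ad Psi a x (T (s - a.-1)%N y)) (leq_addl _ _)).
rewrite !(big_mkcond (fun i : 'I__ => _ && _)); apply: eq_bigr => a _.
case: (boolP (2 <= a)%N) => //= H2.
have -> : (a.-1 <= s)%N = (a < s.+2)%N by rewrite -(ltn_predK H2) ltnS.
case: (a < s.+2)%N => //=.
by case: ltnP => // Ha; rewrite Ad_big ?scaler0.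
Qed.

End Gen.

Lemma T0 (F : fieldType) (U : vectType F) M Psi x y : @T F U M Psi x 0 y = y.
Proof. by rewrite /T big_ord1 S0. Qed.

Section Gop.
Variables (F : fieldType) (U : vectType F).
Variable h : U -> F.
Hypothesis hlin : forall a u v, h (a *: u + v) = a * h u + h v.
Variable Bil : U -> U -> U.
Hypothesis Bl : forall a u v w, Bil (a *: u + v) w = a *: Bil u w + Bil v w.
Hypothesis Br : forall a u v w, Bil w (a *: u + v) = a *: Bil w u + Bil w v.

Definition Gop l (t : {ffun 'I_l -> U}) : U :=
  \sum_(i < l) \sum_(j < l | j != i)
     (\prod_(k < l | (k != i) && (k != j)) h (t k)) *: Bil (t i) (t j).

Lemma Gop_lin l (t : {ffun 'I_l -> U}) (k : 'I_l) (a : F) (u v : U) :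
  Gop l (upd t k (a *: u + v)) = a *: Gop l (upd t k u) + Gop l (upd t k v).
Proof.
rewrite /Gop scaler_sumr -big_split /=; apply: eq_bigr => i _.
rewrite scaler_sumr -big_split /=; apply: eq_bigr => j ji.
have Ept z k' : k' != k -> upd t k z k' = t k'.
  by move=> nk; rewrite /upd ffunE (negbTE nk).
have Epk z : upd t k z k = z by rewrite /upd ffunE eqxx.
have Eprod z : k \notin [pred k' | (k' != i) && (k' != j)] ->
   \prod_(k' < l | (k' != i) && (k' != j)) h (upd t k z k') =
   \prod_(k' < l | (k' != i) && (k' != j)) h (t k').
  move=> Hk; apply: eq_bigr => k' /andP [k'i k'j]; rewrite Ept //.
  by apply/eqP => Ek; move: Hk; rewrite inE -Ek k'i k'j.
case: (eqVneq k i) => [Eki|ki].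
  subst i.
  rewrite !Eprod ?inE ?eqxx // !Epk !Ept // 1?eq_sym //.
  by rewrite Bl scalerDr !scalerA mulrC.
case: (eqVneq k j) => [Ekj|kj].
  subst j.
  rewrite !Eprod ?inE ?eqxx ?andbF // !Epk !Ept // 1?eq_sym //.
  by rewrite Br scalerDr !scalerA mulrC.
rewrite !Ept // 1?eq_sym //.
have Hk : (k != i) && (k != j) by rewrite ki kj.
rewrite !(bigD1 k Hk) /= !Epk hlin.
have Erest z : \prod_(k' < l | ((k' != i) && (k' != j)) && (k' != k)) h (upd t k z k') =
   \prod_(k' < l | ((k' != i) && (k' != j)) && (k' != k)) h (t k').
  by apply: eq_bigr => k' /andP [_ k'k]; rewrite Ept.
rewrite !Erest mulrDl scalerDl !scalerA mulrA.
by congr (_ *: _ + _).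
Qed.

Lemma Gop_sym l (t : {ffun 'I_l -> U}) (s : 'S_l) :
  Gop l [ffun j => t (s j)] = Gop l t.
Proof.
rewrite /Gop [RHS](reindex_inj (@perm_inj _ s)) /=.
apply: eq_bigr => i _.
rewrite [RHS](reindex_inj (@perm_inj _ s)) /=.
apply: eq_big => [j|j ji]; first by rewrite (inj_eq (@perm_inj _ s)).
rewrite !ffunE; congr (_ *: _).
rewrite [RHS](reindex_inj (@perm_inj _ s)) /=.
apply: eq_big => [k|k _]; first by rewrite !(inj_eq (@perm_inj _ s)).
by rewrite ffunE.
Qed.

End Gop.

Lemma Gop2 (F : fieldType) (U : vectType F) (h : U -> F) (Bil : U -> U -> U) (t : {ffun 'I_2 -> U}) :
  Gop F U h Bil 2 t = Bil (t ord0) (t ord_max) + Bil (t ord_max) (t ord0).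
Proof.
rewrite /Gop !big_mkcond !big_ord_recl !big_ord0 /=.
rewrite !big_mkcond !big_ord_recl !big_ord0 /=.
rewrite !big_mkcond !big_ord_recl !big_ord0 /=.
rewrite !big_mkcond !big_ord_recl !big_ord0 /=.
rewrite !big_mkcond !big_ord_recl !big_ord0 /=.
have -> : lift ord0 ord0 = ord_max :> 'I_2 by apply: val_inj.
by rewrite !mul1r !scale1r !add0r !addr0.
Qed.

Arguments Gop {F U}.
Arguments T {F U}.

Lemma lin_comb (F : fieldType) (Z : lmodType F) (a c3 c2 : F) (A1 A2 B1 B2 C1 C2 : Z) :
 (a *: A1 + A2) + c3 *: (a *: B1 + B2) + c2 *: (a *: C1 + C2) =
 a *: (A1 + c3 *: B1 + c2 *: C1) + (A2 + c3 *: B2 + c2 *: C2).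
Proof.
rewrite !scalerDr !scalerA (mulrC c3) (mulrC c2).
by rewrite (addrACA (a *: A1)) (addrACA (a *: A1 + _)).
Qed.

Section Wc.
Variables (F : fieldType) (V : vectType F).
Definition W := (V * (V * ((F^o * F^o) * ((F^o * F^o) * F^o))))%type.

Definition pV (v v' : V) : F :=
  \sum_i coord (vbasis (fullv : {vspace V})) i v * coord (vbasis (fullv : {vspace V})) i v'.

Lemma pVl a u v w : pV (a *: u + v) w = a * pV u w + pV v w.
Proof.
rewrite /pV mulr_sumr -big_split; apply: eq_bigr => i _ /=.
by rewrite linearP /= mulrDl mulrA.
Qed.
Lemma pVr a u v w : pV w (a *: u + v) = a * pV w u + pV w v.
Proof.
rewrite /pV mulr_sumr -big_split; apply: eq_bigr => i _ /=.
by rewrite linearP /= mulrDr mulrCA.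
Qed.

Definition P (u w : W) : F := pV u.1 w.2.1 + u.2.2.1.1 * w.2.2.2.1.1 + u.2.2.1.2 * w.2.2.2.1.2.
Definition cW (w : W) : F := w.2.2.2.2.
Definition Bmap (u : W) : W := (0, (0, (0, ((u.2.2.1.2, - u.2.2.1.1), 0)))).
Definition eW : W := (0, (0, (0, (0, 1)))).
Definition BilT (u w : W) : W := P u w *: eW.
Definition BilO (u w : W) : W := cW w *: Bmap u.

Lemma cWlin a u v : cW (a *: u + v) = a * cW u + cW v.
Proof. by []. Qed.
Lemma Pl a u v w : P (a *: u + v) w = a * P u w + P v w.
Proof. rewrite /P /= pVl /GRing.scale /=; ring. Qed.
Lemma Pr a u v w : P w (a *: u + v) = a * P w u + P w v.
Proof. rewrite /P /= pVr /GRing.scale /=; ring. Qed.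

Lemma W_ext (w1 w2 : W) : w1.1 = w2.1 -> w1.2.1 = w2.2.1 ->
  w1.2.2.1.1 = w2.2.2.1.1 -> w1.2.2.1.2 = w2.2.2.1.2 ->
  w1.2.2.2.1.1 = w2.2.2.2.1.1 -> w1.2.2.2.1.2 = w2.2.2.2.1.2 ->
  w1.2.2.2.2 = w2.2.2.2.2 -> w1 = w2.
Proof.
case: w1 => a1 [b1 [[c1 d1] [[e1 f1] g1]]]; case: w2 => a2 [b2 [[c2 d2] [[e2 f2] g2]]] /=.
by move=> -> -> -> -> -> -> ->.
Qed.

Lemma Bmap_lin a u v : Bmap (a *: u + v) = a *: Bmap u + Bmap v.
Proof.
by apply: W_ext => /=; rewrite ?scaler0 ?addr0 // opprD scalerN.
Qed.
Lemma BilT_l a u v w : BilT (a *: u + v) w = a *: BilT u w + BilT v w.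
Proof. by rewrite /BilT Pl scalerDl scalerA. Qed.
Lemma BilT_r a u v w : BilT w (a *: u + v) = a *: BilT w u + BilT w v.
Proof. by rewrite /BilT Pr scalerDl scalerA. Qed.
Lemma BilO_l a u v w : BilO (a *: u + v) w = a *: BilO u w + BilO v w.
Proof. by rewrite /BilO Bmap_lin scalerDr !scalerA mulrC. Qed.
Lemma BilO_r a u v w : BilO w (a *: u + v) = a *: BilO w u + BilO w v.
Proof. by rewrite /BilO cWlin scalerDl scalerA. Qed.

Variables (m : nat) (Psi : ops V).
Hypothesis HA : is_algebra m Psi.

Definition pr1f l (t : {ffun 'I_l -> W}) : {ffun 'I_l -> V} := [ffun j => (t j).1].
Arguments pr1f {l}.

Definition Phi : ops W := fun l t =>
  ((Psi l (pr1f t), 0) : W) + (l == 3)%:R *: Gop cW BilO l t + (l == 2)%:R *: Gop cW BilT l t.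

Lemma pr1f_upd l (t : {ffun 'I_l -> W}) i z : pr1f (upd t i z) = upd (pr1f t) i z.1.
Proof. by apply/ffunP => j; rewrite !ffunE; case: eqP. Qed.

Lemma Phi_alg : is_algebra m.+3 Phi.
Proof.
case: HA => H0 Hlin Hsym; split.
- move=> l t Hl; rewrite /Phi H0; last first.
    by case: Hl => Hl; [left|right; apply: leq_trans Hl] => //; rewrite ltnW // ltnW.
  have -> : (l == 3)%N = false by case: Hl; case: l t => [|[|[|[|l]]]] //.
  have -> : (l == 2)%N = false by case: Hl; case: l t => [|[|[|l]]] //.
  by rewrite !scale0r !addr0.
- move=> l t i a x y; rewrite /Phi !pr1f_upd Hlin !(Gop_lin _ _ _ cWlin _ BilO_l BilO_r) !(Gop_lin _ _ _ cWlin _ BilT_l BilT_r).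
  set P1 := Psi l (upd (pr1f t) i x.1); set P2 := Psi l (upd (pr1f t) i y.1).
  have -> : ((a *: P1 + P2, 0) : W) = a *: ((P1, 0) : W) + (P2, 0).
    by apply: W_ext => //=; rewrite scaler0 addr0.
  exact: lin_comb.
- move=> l t s; rewrite /Phi !Gop_sym; congr (_ + _ + _).
  have -> : pr1f [ffun j => t (s j)] = [ffun j => pr1f t (s j)] by apply/ffunP => j; rewrite !ffunE.
  by rewrite Hsym.
Qed.

Lemma Gop_projV (Z : lmodType F) (pi : W -> Z)
  (pil : forall a u v, pi (a *: u + v) = a *: pi u + pi v) Bil l (t : {ffun 'I_l -> W}) :
  pi (Gop cW Bil l t) = \sum_(i < l) \sum_(j < l | j != i)
     (\prod_(k < l | (k != i) && (k != j)) cW (t k)) *: pi (Bil (t i) (t j)).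
Proof.
have pi0 : pi 0 = 0 by apply: self_add0; have := pil 1 0 0; rewrite scale1r addr0 scale1r.
have piD u v : pi (u + v) = pi u + pi v by have := pil 1 u v; rewrite !scale1r.
have piZ a u : pi (a *: u) = a *: pi u by have := pil a u 0; rewrite !addr0 pi0 addr0.
rewrite /Gop (big_morph _ piD pi0); apply: eq_bigr => i _.
rewrite (big_morph _ piD pi0); apply: eq_bigr => j _.
by rewrite piZ.
Qed.

Lemma Gop_projF (pi : W -> F)
  (pil : forall a u v, pi (a *: u + v) = a * pi u + pi v) Bil l (t : {ffun 'I_l -> W}) :
  pi (Gop cW Bil l t) = \sum_(i < l) \sum_(j < l | j != i)
     (\prod_(k < l | (k != i) && (k != j)) cW (t k)) * pi (Bil (t i) (t j)).
Proof.
have pi0 : pi 0 = 0 by apply: self_add0; have := pil 1 0 0; rewrite scale1r addr0 mul1r.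
have piD u v : pi (u + v) = pi u + pi v by have := pil 1 u v; rewrite scale1r mul1r.
have piZ a u : pi (a *: u) = a * pi u by have := pil a u 0; rewrite !addr0 pi0 addr0.
rewrite /Gop (big_morph _ piD pi0); apply: eq_bigr => i _.
rewrite (big_morph _ piD pi0); apply: eq_bigr => j _.
by rewrite piZ.
Qed.

Lemma Gop_compV0 (Z : lmodType F) (pi : W -> Z)
  (pil : forall a u v, pi (a *: u + v) = a *: pi u + pi v) Bil l (t : {ffun 'I_l -> W}) :
  (forall i j, i != j -> pi (Bil (t i) (t j)) = 0) -> pi (Gop cW Bil l t) = 0.
Proof.
move=> H; rewrite Gop_projV //; apply: big1 => i _; apply: big1 => j ji.
by rewrite H ?scaler0 // eq_sym.
Qed.

Lemma Gop_compF0 (pi : W -> F)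
  (pil : forall a u v, pi (a *: u + v) = a * pi u + pi v) Bil l (t : {ffun 'I_l -> W}) :
  (forall i j, i != j -> pi (Bil (t i) (t j)) = 0) -> pi (Gop cW Bil l t) = 0.
Proof.
move=> H; rewrite Gop_projF //; apply: big1 => i _; apply: big1 => j ji.
by rewrite H ?mulr0 // eq_sym.
Qed.

Definition Xi (w : W) : V * (F^o * F^o) := (w.2.1, w.2.2.2.1).
Definition st (w : W) : F^o * F^o := w.2.2.1.

Lemma fst_lin a (u v : W) : (a *: u + v).1 = a *: u.1 + v.1. Proof. by []. Qed.
Lemma st_lin a (u v : W) : st (a *: u + v) = a *: st u + st v. Proof. by []. Qed.
Lemma Xi_lin a (u v : W) : Xi (a *: u + v) = a *: Xi u + Xi v. Proof. by []. Qed.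

Lemma pV0r v : pV v 0 = 0.
Proof. by rewrite /pV; apply: big1 => i _; rewrite linear0 mulr0. Qed.
Lemma pV0l v : pV 0 v = 0.
Proof. by rewrite /pV; apply: big1 => i _; rewrite linear0 mul0r. Qed.

Lemma Phi_fst l t : (Phi l t).1 = Psi l (pr1f t).
Proof.
have -> : (Phi l t).1 = Psi l (pr1f t) + (l == 3)%:R *: (Gop cW BilO l t).1 +
   (l == 2)%:R *: (Gop cW BilT l t).1 by [].
rewrite !(Gop_compV0 _ fst fst_lin) ?scaler0 ?addr0 //.
- by move=> i j _; rewrite /BilT /= scaler0.
- by move=> i j _; rewrite /BilO /= scaler0.
Qed.

Lemma Phi_st l t : st (Phi l t) = 0.
Proof.
have -> : st (Phi l t) = 0 + (l == 3)%:R *: st (Gop cW BilO l t) +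
   (l == 2)%:R *: st (Gop cW BilT l t) by [].
rewrite !(Gop_compV0 _ st st_lin) ?scaler0 ?addr0 //.
- by move=> i j _; rewrite /BilT /st /= scaler0.
- by move=> i j _; rewrite /BilO /st /= scaler0.
Qed.
Lemma Phi_Xi l t : Xi (Phi l t) = (l == 3)%:R *: Xi (Gop cW BilO l t).
Proof.
have -> : Xi (Phi l t) = 0 + (l == 3)%:R *: Xi (Gop cW BilO l t) +
   (l == 2)%:R *: Xi (Gop cW BilT l t) by [].
rewrite [Xi (Gop cW BilT l t)](Gop_compV0 _ Xi Xi_lin) ?scaler0 ?addr0 ?add0r //.
by move=> i j _; rewrite /BilT /Xi /= !scaler0.
Qed.

Lemma Phi_cW l t : cW (Phi l t) = (l == 2)%:R * cW (Gop cW BilT l t).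
Proof.
have -> : cW (Phi l t) = 0 + (l == 3)%:R * cW (Gop cW BilO l t) +
   (l == 2)%:R * cW (Gop cW BilT l t) by [].
rewrite [cW (Gop cW BilO l t)](Gop_compF0 cW cWlin) ?mulr0 ?addr0 ?add0r //.
by move=> i j _; rewrite /BilO /cW /= scaler0.
Qed.

Lemma P_pair0 u v : P u ((v, 0) : W) = 0.
Proof. by rewrite /P /= pV0r !mulr0 !addr0. Qed.
Lemma P_eW u : P u eW = 0.
Proof. by rewrite /P /= pV0r !mulr0 !addr0. Qed.

Lemma PD u v w : P u (v + w) = P u v + P u w.
Proof. by have := Pr 1 v w u; rewrite scale1r mul1r. Qed.
Lemma P0 u : P u 0 = 0.
Proof. by apply: self_add0; rewrite -PD addr0. Qed.
Lemma PZ u a v : P u (a *: v) = a * P u v.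
Proof. have := Pr a v 0 u; rewrite !addr0 P0 addr0; exact: id. Qed.

Definition PX (u : W) (xi : V * (F^o * F^o)) : F :=
  pV u.1 xi.1 + u.2.2.1.1 * xi.2.1 + u.2.2.1.2 * xi.2.2.
Lemma P_Xi u w : P u w = PX u (Xi w). Proof. by []. Qed.
Lemma PXZ u a xi : PX u (a *: xi) = a * PX u xi.
Proof.
have := pVr a xi.1 0 u.1; rewrite addr0 pV0r addr0 => E.
rewrite /PX /= E /GRing.scale /=; ring.
Qed.

Lemma Phi_P u l t : P u (Phi l t) = (l == 3)%:R * P u (Gop cW BilO l t).
Proof. by rewrite !P_Xi Phi_Xi PXZ. Qed.
Lemma P_zeroX w v : w.1 = 0 -> st w = 0 -> P w v = 0.
Proof.
rewrite /st /P; case: w => [v1 [? [[s1 t1] ?]]] /= -> [-> ->].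
by rewrite pV0l !mul0r !addr0.
Qed.

Lemma W_ext2 (w1 w2 : W) : w1.1 = w2.1 -> st w1 = st w2 -> Xi w1 = Xi w2 -> cW w1 = cW w2 -> w1 = w2.
Proof.
case: w1 => a1 [b1 [c1 [d1 e1]]]; case: w2 => a2 [b2 [c2 [d2 e2]]].
by rewrite /st /Xi /cW /= => -> -> [-> ->] ->.
Qed.

Lemma pV_sym u v : pV u v = pV v u.
Proof. by rewrite /pV; apply: eq_bigr => i _; rewrite mulrC. Qed.

Lemma pV_nondeg v : v != 0 -> exists v', pV v v' != 0.
Proof.
move=> vn0; have := coord_vbasis (memvf v).
set B := vbasis (fullv : {vspace V}).
have fB : free B := basis_free (vbasisP fullv).
case: (boolP [exists i, coord B i v != 0]) => [/existsP [i Hi] | /existsPn H] Ev.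
  exists B`_i; rewrite /pV (bigD1 i) //= coord_free // eqxx mulr1 big1 ?addr0 //.
  by move=> j ji; rewrite coord_free // eq_sym (negbTE ji) mulr0.
move: vn0; rewrite Ev big1 ?eqxx // => i _.
by move: (H i); rewrite negbK => /eqP ->; rewrite scale0r.
Qed.

Definition pt (w u : W) : {ffun 'I_2 -> W} := [ffun j : 'I_2 => if val j == 0%N then w else u].

Lemma Phi2E (w u : W) : (w.1 = 0 \/ u.1 = 0) -> Phi 2 (pt w u) = (P w u + P u w) *: eW.
Proof.
move=> H; apply: W_ext2.
- rewrite Phi_fst /=; rewrite [RHS](_ : _ = 0); last by rewrite /= scaler0.
  case: H => H.
    by apply: (Psi_zero _ _ _ _ HA _ _ ord0); rewrite !ffunE.
  by apply: (Psi_zero _ _ _ _ HA _ _ ord_max); rewrite !ffunE.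
- by rewrite Phi_st /st /= scaler0.
- by rewrite Phi_Xi /= scale0r /Xi /= !scaler0.
- rewrite Phi_cW /= mul1r Gop2.
  have -> : cW (BilT (pt w u ord0) (pt w u ord_max) + BilT (pt w u ord_max) (pt w u ord0)) =
     P (pt w u ord0) (pt w u ord_max) * 1 + P (pt w u ord_max) (pt w u ord0) * 1 by [].
  have -> : cW ((P w u + P u w) *: eW) = (P w u + P u w) * 1 by [].
  by rewrite !ffunE /= !mulr1.
Qed.

Lemma Xnz (w : W) : (w.1 != 0) || (st w != 0) -> exists u : W, [/\ u.1 = 0, st u = 0 & P w u != 0].
Proof.
case/orP => H.
  have [v' Hv'] := pV_nondeg _ H.
  exists (0, (v', (0, (0, 0)))); split => //.
  by rewrite /P /= !mulr0 !addr0.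
move: H; rewrite /st; case: w => [a [b [[s1 t1] rest]]] /= H.
case: (eqVneq s1 0) => Hs.
  exists (0, (0, (0, ((0, 1), 0)))); split => //.
  rewrite /P /= pV0r mulr0 !add0r mulr1; apply: contra H => Ht.
  by rewrite Hs (eqP Ht).
exists (0, (0, (0, ((1, 0), 0)))); split => //.
by rewrite /P /= pV0r mulr0 addr0 add0r mulr1.
Qed.

Lemma Xinz (w : W) : Xi w != 0 -> exists u : W, Xi u = 0 /\ P u w != 0.
Proof.
rewrite /Xi; case: w => [a [b [c [[s1 t1] rest]]]] /= H.
case: (eqVneq b 0) => Hb.
  case: (eqVneq s1 0) => Hs.
    exists (0, (0, ((0, 1), (0, 0)))); split => //.
    rewrite /P /= pV0l mul0r !add0r mul1r; apply: contra H => Ht.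
    by rewrite Hb Hs (eqP Ht).
  exists (0, (0, ((1, 0), (0, 0)))); split => //.
  by rewrite /P /= pV0l mul0r addr0 add0r mul1r.
have [v' Hv'] := pV_nondeg _ Hb.
exists (v', (0, (0, (0, 0)))); split => //.
by rewrite /P /= !mul0r !addr0 pV_sym.
Qed.

Lemma ideal_e (I : {vspace W}) : is_ideal Phi I -> I != 0%VS -> eW \in I.
Proof.
move=> HI In0.
set w := vpick I.
have wI : w \in I := memv_pick I.
have wn0 : w != 0 by rewrite vpick0.
have key : forall k : F, k != 0 -> k *: eW \in I -> eW \in I.
  by move=> k kn0 Hk; rewrite -[eW]scale1r -(mulVf kn0) -scalerA memvZ.
case: (boolP ((w.1 != 0) || (st w != 0))) => HX.
  have [u [u1 ust Pwu]] := Xnz _ HX.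
  apply: (key (P w u)) => //.
  have H2 : Phi 2 (pt w u) \in I by apply: (HI 2 (pt w u) ord0); rewrite ffunE.
  rewrite Phi2E in H2; last by right.
  rewrite (P_zeroX u w u1 ust) addr0 in H2; exact: H2.
move: HX; rewrite negb_or !negbK => /andP [/eqP w1 /eqP wst].
case: (eqVneq (Xi w) 0) => HXi.
  have Ew : w = cW w *: eW.
    apply: W_ext2 => //.
    - by rewrite w1 /= scaler0.
    - by rewrite wst /st /= scaler0.
    - by rewrite HXi /Xi /= !scaler0.
    - by rewrite -[RHS]/(cW w * 1) mulr1.
  apply: (key (cW w)); last by rewrite -Ew.
  by apply: contra wn0 => /eqP c0; rewrite Ew c0 scale0r.
have [u [uXi Puw]] := Xinz _ HXi.
apply: (key (P u w)) => //.
have H2 : Phi 2 (pt w u) \in I by apply: (HI 2 (pt w u) ord0); rewrite ffunE.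
rewrite Phi2E in H2; last by left.
rewrite (P_zeroX w u w1 wst) add0r in H2; exact: H2.
Qed.


Definition u3 : W := (0, (0, ((1, 0), (0, 0)))).
Definition t3 : {ffun 'I_3 -> W} := [ffun j : 'I_3 => if val j == 2%N then u3 else eW].
Definition tauW (w : W) : F := w.2.2.2.1.2.

Lemma tau3 : tauW (Phi 3%N t3) = - (1 + 1).
Proof.
have -> : tauW (Phi 3%N t3) = (Xi (Phi 3%N t3)).2.2 by [].
rewrite Phi_Xi /=.
rewrite scale1r -[(Gop _ _ _ _).2.2.2.1.2]/(tauW (Gop cW BilO 3 t3)).
rewrite (Gop_projF tauW (fun a u v => erefl)).
have E a b : tauW (BilO a b) = cW b * - a.2.2.1.1 by [].
under eq_bigr do under eq_bigr do rewrite E.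
rewrite !big_mkcond !big_ord_recl !big_ord0 /=.
rewrite !big_mkcond !big_ord_recl !big_ord0 /=.
rewrite !big_mkcond !big_ord_recl !big_ord0 /=.
rewrite !big_mkcond !big_ord_recl !big_ord0 /=.
rewrite !big_mkcond !big_ord_recl !big_ord0 /=.
rewrite !big_mkcond !big_ord_recl !big_ord0 /=.
rewrite !big_mkcond !big_ord_recl !big_ord0 /=.
rewrite !big_mkcond !big_ord_recl !big_ord0 /=.
rewrite !big_mkcond !big_ord_recl !big_ord0 /=.
rewrite !big_mkcond !big_ord_recl !big_ord0 /=.
rewrite !ffunE /= /cW /=.
ring.
Qed.


Lemma Phi_prime (charF0 : [pchar F]%R =i pred0) : prime_alg Phi.
Proof.
move=> I J HI HJ HZ.
case: (eqVneq I 0%VS) => [->|In0]; first by left.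
case: (eqVneq J 0%VS) => [->|Jn0]; first by right.
exfalso.
have eI := ideal_e I HI In0; have eJ := ideal_e J HJ Jn0.
have H0 : Phi 3%N t3 = 0.
  apply: (HZ 3%N t3 ord0 (inord 1)).
  - by apply/eqP => /(congr1 val); rewrite /= inordK.
  - by rewrite ffunE.
  - by rewrite ffunE /= inordK.
have := tau3; rewrite H0 => /eqP; rewrite eq_sym oppr_eq0.
have -> : (1 + 1 : F) = 2%:R by [].
by move/pcharf0P: charF0 => ->.
Qed.


Lemma Phi_embed : embedding Psi Phi (fun v : V => ((v, 0) : W)).
Proof.
split.
- by move=> a u v; apply: W_ext => //=; rewrite scaler0 addr0.
- by move=> u v [].
- move=> l t.
  set tt := [ffun j => ((t j, 0) : W)].
  have G0 Bil : (forall a b : V, Bil ((a, 0) : W) ((b, 0) : W) = 0) -> Gop cW Bil l tt = 0.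
    move=> H; rewrite /Gop; apply: big1 => i _; apply: big1 => j _.
    by rewrite !ffunE H scaler0.
  have GO : Gop cW BilO l tt = 0.
    by apply: G0 => a b; rewrite /BilO -[cW _]/(0 : F) scale0r.
  have GT : Gop cW BilT l tt = 0.
    by apply: G0 => a b; rewrite /BilT P_pair0 scale0r.
  apply: W_ext2.
  + rewrite Phi_fst /=; congr (Psi l _); apply/ffunP => j; rewrite !ffunE; by [].
  + by rewrite Phi_st.
  + by rewrite Phi_Xi GO /Xi /= !scaler0.
  + by rewrite Phi_cW GT /cW /= mulr0.
Qed.

Variable x : W.
Definition adt l (w : W) : {ffun 'I_l -> W} := [ffun j : 'I_l => if val j == 0%N then w else x].
Lemma adtE l w (j : 'I_l) : adt l w j = if val j == 0%N then w else x.
Proof. by rewrite ffunE. Qed.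
Lemma AdE l w : Ad Phi l x w = Phi l (adt l w). Proof. by []. Qed.

Lemma E1 a w : (Ad Phi a x w).1 = Ad Psi a x.1 w.1.
Proof.
rewrite AdE Phi_fst /Ad; congr (Psi a _); apply/ffunP => j; rewrite !ffunE.
by case: (_ == _).
Qed.
Lemma E2 a w : st (Ad Phi a x w) = 0.
Proof. by rewrite AdE Phi_st. Qed.
Lemma E3 a w : a != 3%N -> Xi (Ad Phi a x w) = 0.
Proof. by move=> /negbTE Ha; rewrite AdE Phi_Xi Ha scale0r. Qed.
Lemma E4 a w : a != 2%N -> cW (Ad Phi a x w) = 0.
Proof. by move=> /negbTE Ha; rewrite AdE Phi_cW Ha mul0r. Qed.
Lemma E6a a w : a != 3%N -> P x (Ad Phi a x w) = 0.
Proof. by move=> /negbTE Ha; rewrite AdE Phi_P Ha mul0r. Qed.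

Lemma prod_zero l w (i j : 'I_l) : val i != 0%N -> val j != 0%N -> cW w = 0 ->
  \prod_(k < l | (k != i) && (k != j)) cW (adt l w k) = 0.
Proof.
move=> Hi Hj Hw.
have l0 : (0 < l)%N by apply: leq_ltn_trans (ltn_ord i).
pose k0 : 'I_l := Ordinal l0.
have Hk : (k0 != i) && (k0 != j).
  by apply/andP; split; apply/eqP => E; [move: Hi|move: Hj]; rewrite -E.
by rewrite (bigD1 k0 Hk) /= adtE /= Hw mul0r.
Qed.

Lemma E5 w : st w = 0 -> cW w = 0 -> Xi (Ad Phi 3 x w) = 0.
Proof.
move=> Hst Hc; rewrite AdE Phi_Xi /= scale1r Gop_projV; last exact: Xi_lin.
apply: big1 => i _; apply: big1 => j ji.
have -> : Xi (BilO (adt 3 w i) (adt 3 w j)) = cW (adt 3 w j) *: Xi (Bmap (adt 3 w i)) by [].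
case: (boolP (val i == 0%N)) => Hi.
  rewrite [adt 3 w i]adtE ifT //.
  have -> : Xi (Bmap w) = 0.
    by move: Hst; rewrite /st /Xi /Bmap /=; case: (w) => [? [? [[s1 t1] ?]]] /= [-> ->]; rewrite oppr0.
  by rewrite !scaler0.
case: (boolP (val j == 0%N)) => Hj.
  by rewrite [adt 3 w j]adtE ifT // Hc scale0r scaler0.
by rewrite prod_zero // scale0r.
Qed.
Lemma P_BilO u v w : P u (BilO v w) = cW w * PX u (Xi (Bmap v)).
Proof.
rewrite P_Xi; have -> : Xi (BilO v w) = cW w *: Xi (Bmap v) by [].
by rewrite PXZ.
Qed.
Lemma PX_Bmap u v : PX u (Xi (Bmap v)) = u.2.2.1.1 * v.2.2.1.2 - u.2.2.1.2 * v.2.2.1.1.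
Proof. by rewrite /PX /= pV0r add0r mulrN. Qed.

Lemma E6b w : st w = 0 -> P x (Ad Phi 3 x w) = 0.
Proof.
move=> Hst; rewrite AdE Phi_P /= mul1r (Gop_projF (P x) (fun a v w => Pr a v w x)).
apply: big1 => i _; apply: big1 => j ji.
rewrite P_BilO PX_Bmap [adt 3 w i]adtE.
case: ifP => _; last by rewrite [X in X - _]mulrC subrr !mulr0.
move: Hst; rewrite /st; case: (w) => [? [? [[s1 t1] ?]]] /= [-> ->].
by rewrite !mulr0 subrr !mulr0.
Qed.



Lemma E7 w : w.1 = 0 -> st w = 0 -> P x w = 0 -> cW (Ad Phi 2 x w) = 0.
Proof.
move=> H1 Hst HP; rewrite AdE Phi_cW /= mul1r (Gop_projF cW cWlin).
apply: big1 => i _; apply: big1 => j ji.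
have -> : cW (BilT (adt 2 w i) (adt 2 w j)) = P (adt 2 w i) (adt 2 w j) * 1 by [].
rewrite mulr1 [adt 2 w i]adtE.
case: ifP => Hi; first by rewrite P_zeroX ?mulr0.
have Hj : val j == 0%N.
  move: ji (ltn_ord i) (ltn_ord j) Hi; case: i => [[|[|i]] ?] //=; case: j => [[|[|j]] ?] //=.
by rewrite adtE Hj HP mulr0.
Qed.
Lemma sumZ_V (Z : lmodType F) (pi : W -> Z)
  (pil : forall a u v, pi (a *: u + v) = a *: pi u + pi v) n (Q : pred 'I_n) (c : 'I_n -> F) (G : 'I_n -> W) :
  pi (\sum_(i < n | Q i) c i *: G i) = \sum_(i < n | Q i) c i *: pi (G i).
Proof.
have pi0 : pi 0 = 0 by apply: self_add0; have := pil 1 0 0; rewrite scale1r addr0 scale1r.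
have piD u v : pi (u + v) = pi u + pi v by have := pil 1 u v; rewrite !scale1r.
have piZ a u : pi (a *: u) = a *: pi u by have := pil a u 0; rewrite !addr0 pi0 addr0.
rewrite (big_morph _ piD pi0); apply: eq_bigr => i _; exact: piZ.
Qed.

Lemma sumZ_F (pi : W -> F)
  (pil : forall a u v, pi (a *: u + v) = a * pi u + pi v) n (Q : pred 'I_n) (c : 'I_n -> F) (G : 'I_n -> W) :
  pi (\sum_(i < n | Q i) c i *: G i) = \sum_(i < n | Q i) c i * pi (G i).
Proof.
have pi0 : pi 0 = 0 by apply: self_add0; have := pil 1 0 0; rewrite scale1r addr0 mul1r.
have piD u v : pi (u + v) = pi u + pi v by have := pil 1 u v; rewrite scale1r mul1r.
have piZ a u : pi (a *: u) = a * pi u by have := pil a u 0; rewrite !addr0 pi0 addr0.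
rewrite (big_morph _ piD pi0); apply: eq_bigr => i _; exact: piZ.
Qed.

Notation TW := (T (m.+3) Phi x).
Notation TV := (T m Psi x.1).

Lemma C0 s w : (TW s w).1 = TV s w.1.
Proof.
elim/ltn_ind: s w => s IH w.
case: s IH => [|s] IH; first by rewrite !T0.
rewrite (T_rec _ _ _ _ Phi_alg) // (T_rec _ _ _ _ HA) //.
rewrite (sumZ_V _ fst fst_lin); apply: eq_bigr => a Ha.
rewrite E1 IH //.
by move: Ha; case: (val a) => [|[|a']] //= _; lia.
Qed.
Lemma Cst s w : (0 < s)%N -> st (TW s w) = 0.
Proof.
move=> s0; rewrite (T_rec _ _ _ _ Phi_alg) // (sumZ_V _ st st_lin).
by apply: big1 => a _; rewrite E2 scaler0.
Qed.

Variable K : nat.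
Hypothesis K1 : (0 < K)%N.
Hypothesis HV : forall s v, (K <= s)%N -> TV s v = 0.

Lemma CX1 s w : (K <= s)%N -> (TW s w).1 = 0.
Proof. by move=> Hs; rewrite C0 HV. Qed.
Lemma CXst s w : (K <= s)%N -> st (TW s w) = 0.
Proof. by move=> Hs; rewrite Cst //; apply: leq_trans Hs. Qed.

Lemma C2 s w : (K + 2 <= s)%N -> P x (TW s w) = 0.
Proof.
move=> Hs; rewrite (T_rec _ _ _ _ Phi_alg); last by lia.
rewrite (sumZ_F (P x) (fun a v w => Pr a v w x)).
apply: big1 => a Ha.
case: (eqVneq (val a) 3%N) => H3; last by rewrite E6a // mulr0.
by rewrite H3 E6b ?mulr0 // CXst //=; lia.
Qed.

Lemma C3 s w : (K + 3 <= s)%N -> cW (TW s w) = 0.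
Proof.
move=> Hs; rewrite (T_rec _ _ _ _ Phi_alg); last by lia.
rewrite (sumZ_F cW cWlin).
apply: big1 => a Ha.
case: (eqVneq (val a) 2%N) => H2; last by rewrite E4 // mulr0.
rewrite H2 E7 ?mulr0 //=.
- by rewrite CX1 //; lia.
- by rewrite CXst //; lia.
- by rewrite C2 //; lia.
Qed.

Lemma C4 s w : (K + 5 <= s)%N -> Xi (TW s w) = 0.
Proof.
move=> Hs; rewrite (T_rec _ _ _ _ Phi_alg); last by lia.
rewrite (sumZ_V _ Xi Xi_lin).
apply: big1 => a Ha.
case: (eqVneq (val a) 3%N) => H3; last by rewrite E3 // scaler0.
rewrite H3 E5 ?scaler0 //=.
- by rewrite CXst //; lia.
- by rewrite C3 //; lia.
Qed.

Lemma CT s w : (K + 5 <= s)%N -> TW s w = 0.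
Proof.
move=> Hs.
have H1 := CX1 s w; have H2 := CXst s w.
have H3 := C3 s w; have H4 := C4 s w Hs.
move: (H1 ltac:(lia)) (H2 ltac:(lia)) (H3 ltac:(lia)) H4.
rewrite /st /cW /Xi; case: (TW s w) => [a [b [[c d] [[e f] g]]]] /= -> [-> ->] -> [-> [-> ->]].
by [].
Qed.
End Wc.

Lemma Phi_engel (F : fieldType) (V : vectType F) (m : nat) (Psi : ops V) (HA : is_algebra m Psi) :
  engel_type m Psi -> engel_type m.+3 (Phi F V Psi).
Proof.
case=> s0 Hs0.
pose K := maxn s0 1.
have K1 : (0 < K)%N by rewrite leq_max orbT.
exists (K + 5)%N => s Hs x y.
rewrite EopE; last by lia.
apply: (CT F V m Psi HA x K K1) => //.
move=> s' v Hs'; rewrite -EopE; last by lia.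
apply: Hs0; lia.
Qed.

Theorem mainTheorem6 (F : fieldType) (charF0 : [pchar F]%R =i pred0)
  (V : vectType F) (m : nat) (Psi : ops V) :
  is_algebra m Psi -> engel_type m Psi ->
  exists (W : vectType F) (m' : nat) (Phi : ops W) (f : V -> W),
    [/\ is_algebra m' Phi, prime_alg Phi, engel_type m' Phi & embedding Psi Phi f].
Proof.
move=> HA HE.
exists (W F V), m.+3, (Phi F V Psi), (fun v => ((v, 0) : W F V)).
split.
- exact: (Phi_alg F V m Psi HA).
- exact: (Phi_prime F V m Psi HA charF0).
- exact: (Phi_engel F V m Psi HA HE).
- exact: (Phi_embed F V Psi).
Qed.
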